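(* For every integer $d\ge2$ there are infinitely many $d$-degenerate graphs $H$ with $\alpha_d(H)<\mathrm{flap}_d(H)$.
   Context: Graphs are finite and simple. A graph is $d$-degenerate if every subgraph has minimum degree at most $d$. $\alpha_d(H)$ is the maximum size of a set of pairwise non-adjacent vertices of $H$ each of degree at most $d$ in $H$. A separation of $H$ is an ordered pair $(A,B)$ of subsets of $V(H)$ with $A\cup B=V(H)$ and no edge between $A\setminus B$ and $B\setminus A$; its order is $|A\cap B|$. A collection $\mathcal C$ of separations is independent if $A\setminus B\ne\emptyset$ for each $(A,B)\in\mathcal C$ and $A\subseteq D$, $C\subseteq B$ for all distinct $(A,B),(C,D)\in\mathcal C$. $\mathrm{flap}_d(H)$ is the maximum size of an independent collection of separations of $H$ each of order at most $d$. *)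

(* Defs.v *)
(* A finite simple graph is a finType T (vertices) with a
   symmetric irreflexive edge relation e : rel T. *)
From mathcomp Require Import all_boot all_order.
Set Implicit Arguments. Unset Strict Implicit. Unset Printing Implicit Defensive.

Section Graphs.
Variable T : finType.

Definition simple_graph (e : rel T) : Prop := symmetric e /\ irreflexive e.

Definition deg_in (f : rel T) (S : {set T}) (v : T) : nat :=
  #|[set u in S | f v u]|.

Definition deg (e : rel T) (v : T) : nat := deg_in e [set: T] v.

Definition degenerate (e : rel T) (d : nat) : Prop :=
  forall (S : {set T}) (f : rel T),
    symmetric f -> (forall x y, f x y -> e x y) -> S != set0 ->
    exists2 v, v \in S & deg_in f S v <= d.

Definition low_indep (e : rel T) (d : nat) (I : {set T}) : bool :=
  [forall x in I, forall y in I, ~~ e x y] && [forall x in I, deg e x <= d].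

Definition alpha_d (e : rel T) (d : nat) : nat :=
  \max_(I : {set T} | low_indep e d I) #|I|.

Definition separation (e : rel T) (s : {set T} * {set T}) : bool :=
  (s.1 :|: s.2 == [set: T]) &&
  [forall x in s.1 :\: s.2, forall y in s.2 :\: s.1, ~~ e x y].

Definition sep_order (s : {set T} * {set T}) : nat := #|s.1 :&: s.2|.

Definition independent_seps (C : {set {set T} * {set T}}) : bool :=
  [forall s in C, s.1 :\: s.2 != set0] &&
  [forall s in C, forall t in C,
     (s != t) ==> (s.1 \subset t.2) && (t.1 \subset s.2)].

Definition flap_coll (e : rel T) (d : nat) (C : {set {set T} * {set T}}) : bool :=
  [forall s in C, separation e s && (sep_order s <= d)] && independent_seps C.

Definition flap_d (e : rel T) (d : nat) : nat :=
  \max_(C : {set {set T} * {set T}} | flap_coll e d C) #|C|.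

End Graphs.

(* Main.v *)
Require Import Defs.
From mathcomp Require Import all_boot all_order.
From mathcomp Require Import zify.

Definition E (d i j : nat) : bool :=
  (i < j) && ((((j - i) <= d) && ~~ ((i == d) && (j == d.+1))) || ((i == 0) && (j == d.+1))).

Definition eG (d N : nat) : rel 'I_N := fun x y => E d x y || E d y x.

Lemma card_le_interval N (S : {set 'I_N}) lo k :
  (forall u, u \in S -> lo <= u < lo + k) -> #|S| <= k.
Proof.
move=> H; rewrite cardE -(size_map val) -(size_iota lo k).
apply: uniq_leq_size; first by rewrite map_inj_uniq ?enum_uniq //; exact: val_inj.
by move=> m /mapP [u]; rewrite mem_enum => uS ->; rewrite mem_iota; exact: H.
Qed.

Lemma card_ge_seq N (S : {set 'I_N}) (s : seq nat) :
  uniq s -> (forall m, m \in s -> m < N) ->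
  (forall m (hm : m < N), m \in s -> Ordinal hm \in S) -> size s <= #|S|.
Proof.
move=> us hN H; rewrite cardE -(size_map val).
apply: uniq_leq_size => // m ms.
have hm := hN m ms.
by apply/mapP; exists (Ordinal hm); rewrite ?mem_enum ?H.
Qed.

Lemma deg_big d N (hd : 2 <= d) (hN : 2 * d + 3 <= N) (x : 'I_N) :
  val x != N.-1 -> d < deg (eG d N) x.
Proof.
case: x => x hxN /= hx; rewrite /deg /deg_in.
have [x0|xpos] := eqVneq x 0.
  apply: leq_trans (_ : size (iota 1 d.+1) <= _); first by rewrite size_iota.
  apply: card_ge_seq; first exact: iota_uniq.
    by move=> m; rewrite mem_iota; lia.
  by move=> m hm; rewrite mem_iota !inE /eG /E /= x0; lia.
have [xsmall|xlarge] := ltnP x d.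
  apply: leq_trans (_ : size (rem x (iota 0 (x + d + 1))) <= _).
    by rewrite size_rem ?size_iota ?mem_iota; lia.
  apply: card_ge_seq; first by apply: rem_uniq; exact: iota_uniq.
    by move=> m; rewrite mem_rem_uniq ?iota_uniq // inE mem_iota; lia.
  by move=> m hm; rewrite mem_rem_uniq ?iota_uniq // !inE mem_iota /eG /E /=; lia.
have [xmid|xhigh] := leqP x d.+1.
  apply: leq_trans (_ : size (d.+2 :: iota 0 d) <= _); first by rewrite /= size_iota.
  apply: card_ge_seq.
    by rewrite /= iota_uniq mem_iota andbT; lia.
    by move=> m; rewrite inE mem_iota; lia.
  by move=> m hm; rewrite !inE mem_iota /eG /E /=; lia.
apply: leq_trans (_ : size (x.+1 :: iota (x - d) d) <= _); first by rewrite /= size_iota.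
apply: card_ge_seq.
  by rewrite /= iota_uniq mem_iota andbT; lia.
  by move=> m; rewrite inE mem_iota; lia.
by move=> m hm; rewrite !inE mem_iota /eG /E /=; lia.
Qed.

Theorem mainTheorem7 :
  forall d : nat, 2 <= d ->
  forall n : nat, exists (T : finType) (e : rel T),
    [/\ simple_graph e, n < #|T|, degenerate e d & alpha_d e d < flap_d e d].
Proof.
move=> d hd n.
pose N := n + 2 * d + 3.
have hN : 2 * d + 3 <= N by rewrite /N; lia.
have hnN : n < N by rewrite /N; lia.
clearbody N.
exists ('I_N : finType), (eG d N); split.
- split.
    by move=> x y; rewrite /eG orbC.
  by move=> x; rewrite /eG /E; apply/negP; lia.
- by rewrite card_ord; lia.
- move=> S f fsym fe /set0Pn [v0 v0S].
  case: (@arg_maxnP _ v0 (mem S) (fun v : 'I_N => nat_of_ord v) v0S) => v vS vmax.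
  exists v => //.
  apply: (@card_le_interval _ _ (if nat_of_ord v == d.+1 then 0 else v - d)) => u.
  rewrite inE => /andP [uS fvu].
  have hvu : u <= v := vmax u uS.
  have := fe _ _ fvu; rewrite /eG /E.
  case: ifP => /eqP hv; lia.
- apply: (@leq_trans 2).
    apply/bigmax_leqP => I /andP [_ /forallP hdeg].
    apply: (@leq_trans 1) => //.
    apply: (@card_le_interval _ _ (N.-1)) => u uI.
    have := implyP (hdeg u) uI => hu.
    have huN := ltn_ord u.
    case: (eqVneq (nat_of_ord u) N.-1) => [->|hne]; first by lia.
    have h : d < deg (eG d N) u := @deg_big d N hd hN u hne.
    by have := leq_trans h hu; rewrite ltnn.
  pose s1 := ([set u : 'I_N | nat_of_ord u <= d.+1], [set u : 'I_N | 2 <= nat_of_ord u]).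
  pose s2 := ([set u : 'I_N | N - d.+1 <= nat_of_ord u], [set u : 'I_N | nat_of_ord u <= N - 2]).
  have h0 : 0 < N by lia.
  have hne : s1 != s2.
    apply/eqP => /(f_equal (fun s : {set 'I_N} * {set 'I_N} => (Ordinal h0) \in s.1)).
    by rewrite /s1 /s2 /= !inE /=; lia.
  have -> : 2 = #|[set s1; s2]| by rewrite cards2 hne.
  apply: leq_bigmax_cond.
  apply/andP; split.
    apply/forallP => s; apply/implyP => /set2P [->|->]; apply/andP; split.
    + apply/andP; split.
        by apply/eqP/setP => u; rewrite !inE; lia.
      apply/forallP => x; apply/implyP; rewrite !inE => hx.
      apply/forallP => y; apply/implyP; rewrite !inE => hy.
      rewrite /eG /E; lia.
    + rewrite /sep_order; apply: (@card_le_interval _ _ (2)) => u.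
      by rewrite !inE; lia.
    + apply/andP; split.
        by apply/eqP/setP => u; rewrite !inE; lia.
      apply/forallP => x; apply/implyP; rewrite !inE => hx.
      apply/forallP => y; apply/implyP; rewrite !inE => hy.
      have hxN := ltn_ord x; 
      rewrite /eG /E.
      have -> : (x < y) = false by lia.
      have -> : (x - y <= d) = false by lia.
      have -> : (x == d.+1 :> nat) = false by lia.
      by rewrite /= !andbF.
    + rewrite /sep_order; apply: (@card_le_interval _ _ (N - d.+1)) => u.
      by rewrite !inE; lia.
  apply/andP; split.
    apply/forallP => s; apply/implyP => /set2P [->|->]; apply/set0Pn.
      by exists (Ordinal h0); rewrite !inE.
    have h : N.-1 < N by lia.
    by exists (Ordinal h); rewrite !inE /=; lia.
  apply/forallP => s; apply/implyP => /set2P [->|->];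
  apply/forallP => t; apply/implyP => /set2P [->|->]; rewrite ?eqxx //=;
  apply/implyP => _; apply/andP; split; apply/subsetP => u; rewrite !inE; lia.
Qed.
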